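(* Let $w_1,\ldots,w_n$ be positive weights, $W=\sum_{j=1}^n w_j$, $\tau=W/n$, $w'_i=\lceil w_i/\tau\rceil$ for each $i$, and $W'=\sum_{j=1}^n w'_j$. Let $T'$ be a tree with leaves $\ell_1,\ldots,\ell_n$ and let $c$ be a constant. If the depth of a leaf $\ell_i$ in $T'$ does not exceed $\log(W'/w'_i)+c$, then the depth of $\ell_i$ in $T'$ does not exceed $\min(\log(W/w_i),\log n)+c+1$.
   Context: $\log$ denotes the binary logarithm. *)

(* Defs.v *)
From Stdlib Require Import Reals List Permutation.
Open Scope R_scope.

Definition log2 (x : R) : R := ln x / ln 2.

(* ceiling: Int_part is the floor, so ceil x = - floor (- x) *)
Definition ceilR (x : R) : R := IZR (- Int_part (- x)).

(* finite rooted trees (arbitrary arity); leaves carry labels (leaf l_i has label i) *)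
Inductive tree : Type :=
| Leaf : nat -> tree
| Node : list tree -> tree.

Fixpoint leaves (t : tree) : list nat :=
  match t with
  | Leaf k => k :: nil
  | Node ts => (fix go (l : list tree) : list nat :=
                  match l with nil => nil | t' :: l' => leaves t' ++ go l' end) ts
  end.

(* leaf_depth t k d : the leaf labelled k occurs in t at depth d (root has depth 0) *)
Inductive leaf_depth : tree -> nat -> nat -> Prop :=
| ld_leaf : forall k, leaf_depth (Leaf k) k 0
| ld_node : forall ts t k d, In t ts -> leaf_depth t k d -> leaf_depth (Node ts) k (S d).

Fixpoint sumR (n : nat) (f : nat -> R) : R :=
  match n with O => 0 | S m => sumR m f + f m end.

(* Main.v *)
Require Import Defs.
From Stdlib Require Import Reals List Permutation Lra Lia.
Open Scope R_scope.

Lemma ceil_ge x : x <= ceilR x.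
Proof. unfold ceilR. rewrite opp_IZR. destruct (base_Int_part (-x)). lra. Qed.

Lemma ceil_lt x : ceilR x < x + 1.
Proof. unfold ceilR. rewrite opp_IZR. destruct (base_Int_part (-x)). lra. Qed.

Lemma ceil_ge1 x : 0 < x -> 1 <= ceilR x.
Proof.
  intro H. pose proof (ceil_ge x). unfold ceilR in *.
  assert (0 < IZR (- Int_part (- x))) by lra.
  apply lt_0_IZR in H1. apply IZR_le. lia.
Qed.

Lemma sumR_le n f g : (forall j, (j < n)%nat -> f j <= g j) -> sumR n f <= sumR n g.
Proof.
  induction n; simpl; intros H. lra.
  assert (sumR n f <= sumR n g) by (apply IHn; intros; apply H; lia).
  assert (f n <= g n) by (apply H; lia). lra.
Qed.

Lemma sumR_div n f a : sumR n (fun j => f j / a) = sumR n f / a.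
Proof. induction n; simpl. unfold Rdiv; ring. rewrite IHn. unfold Rdiv; ring. Qed.

Lemma sumR_plus1 n f : sumR n (fun j => f j + 1) = sumR n f + INR n.
Proof. induction n; cbn [sumR]. simpl; lra. rewrite IHn, S_INR. ring. Qed.

Lemma sumR_pos n f : (1 <= n)%nat -> (forall j, (j < n)%nat -> 0 < f j) -> 0 < sumR n f.
Proof.
  induction n; intros Hn H. lia. simpl.
  destruct n. simpl. specialize (H 0%nat). assert (0 < f 0%nat) by (apply H; lia). lra.
  assert (0 < sumR (S n) f) by (apply IHn; [lia| intros; apply H; lia]).
  assert (0 < f (S n)) by (apply H; lia). lra.
Qed.

Lemma log2_le x y : 0 < x -> x <= y -> log2 x <= log2 y.
Proof.
  intros. unfold log2. assert (0 < ln 2) by (rewrite <- ln_1; apply ln_increasing; lra).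
  apply Rmult_le_compat_r. left; apply Rinv_0_lt_compat; lra.
  destruct H0. left; apply ln_increasing; lra. subst; lra.
Qed.

Lemma log2_double y : 0 < y -> log2 (2 * y) = 1 + log2 y.
Proof.
  intros. unfold log2. assert (0 < ln 2) by (rewrite <- ln_1; apply ln_increasing; lra).
  rewrite ln_mult by lra. field. lra.
Qed.

Theorem lemma2 (n : nat) (w : nat -> R) (T' : tree) (c : R) (i d : nat) :
  (1 <= n)%nat ->
  (forall j, (j < n)%nat -> 0 < w j) ->
  Permutation (leaves T') (seq 0 n) ->
  (i < n)%nat ->
  leaf_depth T' i d ->
  let W := sumR n w in
  let tau := W / INR n in
  let w' := fun j => ceilR (w j / tau) in
  let W' := sumR n w' in
  INR d <= log2 (W' / w' i) + c ->
  INR d <= Rmin (log2 (W / w i)) (log2 (INR n)) + c + 1.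
Proof.
  intros Hn Hw _ Hi _ W tau w' W' Hd.
  assert (HW : 0 < W) by (apply sumR_pos; auto).
  assert (Hn0 : 0 < INR n) by (apply lt_0_INR; lia).
  assert (Htau : 0 < tau) by (unfold tau; apply Rdiv_lt_0_compat; lra).
  assert (Hwi : 0 < w i) by auto.
  assert (Hsum : sumR n (fun j => w j / tau) = INR n).
  { rewrite sumR_div. fold W. unfold tau. field. split; lra. }
  assert (HW' : W' <= 2 * INR n).
  { unfold W'. apply Rle_trans with (sumR n (fun j => w j / tau + 1)).
    apply sumR_le. intros. unfold w'. left; apply ceil_lt.
    rewrite sumR_plus1, Hsum. lra. }
  assert (Hui : 0 < w i / tau) by (apply Rdiv_lt_0_compat; lra).
  assert (Hw'1 : 1 <= w' i) by (apply ceil_ge1; auto).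
  assert (Hw'u : w i / tau <= w' i) by apply ceil_ge.
  assert (HW'pos : 0 < W').
  { unfold W'. apply sumR_pos; auto. intros. unfold w'.
    assert (0 < w j / tau) by (apply Rdiv_lt_0_compat; auto).
    pose proof (ceil_ge1 _ H0). lra. }
  assert (Hq : 0 < W' / w' i) by (apply Rdiv_lt_0_compat; lra).
  assert (B1 : log2 (W' / w' i) <= 1 + log2 (INR n)).
  { rewrite <- log2_double by lra. apply log2_le; auto.
    apply Rle_trans with W'. 2: lra.
    unfold Rdiv. rewrite <- (Rmult_1_r W') at 2.
    apply Rmult_le_compat_l. lra.
    rewrite <- Rinv_1. apply Rinv_le_contravar; lra. }
  assert (B2 : log2 (W' / w' i) <= 1 + log2 (W / w i)).
  { rewrite <- log2_double by (apply Rdiv_lt_0_compat; lra).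
    apply log2_le; auto.
    apply Rle_trans with (2 * INR n / (w i / tau)).
    { unfold Rdiv. apply Rmult_le_compat. lra. left; apply Rinv_0_lt_compat; lra.
      lra. apply Rinv_le_contravar; lra. }
    right. unfold tau. field. repeat split; lra. }
  unfold Rmin. destruct (Rle_dec _ _); lra.
Qed.
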